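(* Let $W=W_{\mathrm{aff}}\rtimes\Omega$ be an extended Coxeter group with set of hyperplanes $\mathfrak H$ (notation as in the context). Then for all $w,w'\in W$, \[ \mathbb L(w)\cdot w\big(\mathbb L(w')\big)=\mathbb X(w,w')^2\,\mathbb L(ww') \] in the free commutative monoid $\mathbb N[\mathfrak H]$.
   Context: For a Coxeter group $(W_{\mathrm{aff}},S)$, the set of hyperplanes is $\mathfrak H=\{vsv^{-1}:v\in W_{\mathrm{aff}},s\in S\}$. For $v\in W_{\mathrm{aff}}$ with reduced expression $v=s_1\cdots s_r$, the hyperplanes separating $1$ and $v$ are the $r$ distinct elements $(s_1\cdots s_{i-1})s_i(s_1\cdots s_{i-1})^{-1}$, $1\le i\le r$ (independent of the reduced expression); $H$ separates $v_1,v_2\in W_{\mathrm{aff}}$ iff $v_1^{-1}Hv_1$ separates $1$ and $v_1^{-1}v_2$. An extended Coxeter group is $W=W_{\mathrm{aff}}\rtimes\Omega$ where $(W_{\mathrm{aff}},S)$ is a Coxeter group and $\Omega$'s conjugation action preserves $S$; an element $w=vu$ ($v\in W_{\mathrm{aff}},u\in\Omega$) is identified with the chamber $v$, and a hyperplane separates $w,w'\in W$ if it separates the corresponding chambers. $W$ acts on $\mathfrak H$ by conjugation and hence on the free commutative monoid $\mathbb N[\mathfrak H]$ on symbols $\mathbf a_H$ ($H\in\mathfrak H$). Define $\mathbb L(w)=\prod_H\mathbf a_H$ over all $H\in\mathfrak H$ separating $1$ and $w$, and $\mathbb X(w,w')=\prod_H\mathbf a_H$ over all $H\in\mathfrak H$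 which both separate $1$ from $w$ and separate $w$ from $ww'$. *)

(* Defs.v *)
From mathcomp Require Import all_boot.
From mathcomp Require Import boolp.

Set Implicit Arguments.
Unset Strict Implicit.
Unset Printing Implicit Defensive.

Record group := Group {
  gT :> Type;
  gmul : gT -> gT -> gT;
  gone : gT;
  ginv : gT -> gT;
  gmulA : forall x y z, gmul x (gmul y z) = gmul (gmul x y) z;
  gmul1g : forall x, gmul gone x = x;
  gmulg1 : forall x, gmul x gone = x;
  gmulVg : forall x, gmul (ginv x) x = gone;
  gmulgV : forall x, gmul x (ginv x) = gone }.

Arguments gmul {g}.
Arguments gone {g}.
Arguments ginv {g}.

Definition word_in (G : group) (S : G -> Prop) (l : seq G) : Prop :=
  forall i, i < size l -> S (nth gone l i).

Definition gprod (G : group) (l : seq G) : G := foldr gmul gone l.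
Definition gexp (G : group) (x : G) (n : nat) : G := iter n (gmul x) gone.
Definition gconj (G : group) (x y : G) : G := gmul (gmul x y) (ginv x).

Definition is_subgroup (G : group) (P : G -> Prop) : Prop :=
  [/\ P gone, (forall x y, P x -> P y -> P (gmul x y)) & (forall x, P x -> P (ginv x))].

(* (Waff, S) is a Coxeter system, Waff a subgroup of G:
   S consists of involutions of Waff, generates Waff, and Waff has the presentation
   < S | s^2 = 1, (st)^(m_st) = 1 > (m_st = order of st), expressed by the
   universal property of that presentation. *)
Definition coxeter_system (G : group) (Waff S : G -> Prop) : Prop :=
  [/\ is_subgroup Waff,
      (forall s, S s -> Waff s),
      (forall s, S s -> s <> gone /\ gmul s s = gone),
      (forall v, Waff v -> exists l : seq G, word_in S l /\ v = gprod l) &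
      (forall (K : group) (f : G -> K),
         (forall s, S s -> gmul (f s) (f s) = gone) ->
         (forall s t m, S s -> S t -> gexp (gmul s t) m = gone ->
                        gexp (gmul (f s) (f t)) m = gone) ->
         exists phi : G -> K,
           (forall s, S s -> phi s = f s) /\
           (forall x y, Waff x -> Waff y -> phi (gmul x y) = gmul (phi x) (phi y)))].

(* G = Waff ⋊ Omega (internal semidirect product), with (Waff,S) Coxeter and
   conjugation by Omega preserving S. *)
Definition extended_coxeter (G : group) (Waff S Omega : G -> Prop) : Prop :=
  coxeter_system Waff S /\
  [/\ is_subgroup Omega,
      (forall u v, Omega u -> Waff v -> Waff (gconj u v)),
      (forall u s, Omega u -> S s -> S (gconj u s)),
      (forall w, exists v u, [/\ Waff v, Omega u & w = gmul v u]) &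
      (forall x, Waff x -> Omega x -> x = gone)].

Definition reduced_expr (G : group) (S : G -> Prop) (l : seq G) (v : G) : Prop :=
  [/\ word_in S l, gprod l = v &
      forall l' : seq G, word_in S l' -> gprod l' = v -> size l <= size l'].

(* H separates 1 and v (v in Waff) *)
Definition sep1 (G : group) (S : G -> Prop) (v H : G) : Prop :=
  exists l : seq G, reduced_expr S l v /\
    exists2 i, i < size l & H = gconj (gprod (take i l)) (nth gone l i).

Definition sep_aff (G : group) (S : G -> Prop) (v1 v2 H : G) : Prop :=
  sep1 S (gmul (ginv v1) v2) (gconj (ginv v1) H).

(* H separates w1, w2 in W: separates the chambers v1, v2 where wi = vi ui *)
Definition sepW (G : group) (Waff S Omega : G -> Prop) (w1 w2 H : G) : Prop :=
  exists v1 u1 v2 u2,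
    [/\ Waff v1, Omega u1 & w1 = gmul v1 u1] /\
    [/\ Waff v2, Omega u2 & w2 = gmul v2 u2] /\
    sep_aff S v1 v2 H.

(* The free commutative monoid N[hyperplanes], represented by multiplicity
   functions (all elements considered below are finitely supported on hyperplanes). *)
Definition fcm (G : group) := G -> nat.
Definition fcm_mul (G : group) (m1 m2 : fcm G) : fcm G := fun x => m1 x + m2 x.
(* action of w : w(a_H) = a_{w H w^-1} *)
Definition fcm_act (G : group) (w : G) (m : fcm G) : fcm G :=
  fun x => m (gconj (ginv w) x).

Definition Lmon (G : group) (Waff S Omega : G -> Prop) (w : G) : fcm G :=
  fun H => nat_of_bool `[< sepW Waff S Omega gone w H >].

Definition Xmon (G : group) (Waff S Omega : G -> Prop) (w w' : G) : fcm G :=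
  fun H => nat_of_bool `[< sepW Waff S Omega gone w H /\
                          sepW Waff S Omega w (gmul w w') H >].

(* Main.v *)
Require Import Defs.
From mathcomp Require Import all_boot.
From mathcomp Require Import boolp.

Set Implicit Arguments.
Unset Strict Implicit.
Unset Printing Implicit Defensive.

Section GroupFacts.
Variable G : group.
Local Notation "x ** y" := (@gmul G x y) (at level 40, left associativity).
Local Notation "1" := (@gone G).

Lemma mulKg (x y : G) : ginv x ** (x ** y) = y.
Proof. by rewrite gmulA gmulVg gmul1g. Qed.
Lemma mulVKg (x y : G) : x ** (ginv x ** y) = y.
Proof. by rewrite gmulA gmulgV gmul1g. Qed.
Lemma mulgK (x y : G) : (y ** x) ** ginv x = y.
Proof. by rewrite -gmulA gmulgV gmulg1. Qed.
Lemma mulgVK (x y : G) : (y ** ginv x) ** x = y.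
Proof. by rewrite -gmulA gmulVg gmulg1. Qed.
Lemma mulg_cancel (x y z : G) : x ** y = x ** z -> y = z.
Proof. by move=> h; rewrite -(mulKg x y) h mulKg. Qed.
Lemma mulg_cancelr (x y z : G) : y ** x = z ** x -> y = z.
Proof. by move=> h; rewrite -(mulgK x y) h mulgK. Qed.
Lemma ginv_uniq (x y : G) : x ** y = 1 -> ginv x = y.
Proof. by move=> h; apply: (@mulg_cancel x); rewrite gmulgV h. Qed.
Lemma ginvK (x : G) : ginv (ginv x) = x.
Proof. by apply: ginv_uniq; rewrite gmulVg. Qed.
Lemma ginv1 : ginv 1 = 1 :> G.
Proof. by apply: ginv_uniq; rewrite gmul1g. Qed.
Lemma ginvM (x y : G) : ginv (x ** y) = ginv y ** ginv x.
Proof. by apply: ginv_uniq; rewrite -gmulA mulVKg gmulgV. Qed.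
Lemma invol (x : G) : x ** x = 1 -> ginv x = x.
Proof. exact: ginv_uniq. Qed.

Lemma gconjM (a b h : G) : gconj (a ** b) h = gconj a (gconj b h).
Proof. by rewrite /gconj ginvM !gmulA. Qed.
Lemma gconj1 (h : G) : gconj 1 h = h.
Proof. by rewrite /gconj ginv1 gmul1g gmulg1. Qed.
Lemma gconjK (a h : G) : gconj (ginv a) (gconj a h) = h.
Proof. by rewrite -gconjM gmulVg gconj1. Qed.
Lemma gconjVK (a h : G) : gconj a (gconj (ginv a) h) = h.
Proof. by rewrite -gconjM gmulgV gconj1. Qed.
Lemma gconj_eq (a t r : G) : gconj a t = r <-> t = gconj (ginv a) r.
Proof. by split=> [<-|->]; rewrite ?gconjK ?gconjVK. Qed.
Lemma gconjMr (a x y : G) : gconj a (x ** y) = gconj a x ** gconj a y.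
Proof. by rewrite /gconj !gmulA mulgVK. Qed.
Lemma gconj_one (a : G) : gconj a 1 = 1.
Proof. by rewrite /gconj gmulg1 gmulgV. Qed.

Lemma gprod_cat (l1 l2 : seq G) : gprod (l1 ++ l2) = gprod l1 ** gprod l2.
Proof. by elim: l1 => [|s l IH] /=; rewrite ?gmul1g // IH gmulA. Qed.

Lemma gexpS' (x : G) n : gexp x n.+1 = gexp x n ** x.
Proof.
have e : forall k, gexp x k.+1 = x ** gexp x k by [].
elim: n => [|n IH]; first by rewrite /gexp /= gmulg1 gmul1g.
by rewrite [LHS]e [in LHS]IH gmulA -e.
Qed.
Lemma gexpD (x : G) m n : gexp x (m + n) = gexp x m ** gexp x n.
Proof.
have e : forall k, gexp x k.+1 = x ** gexp x k by [].
by elim: m => [|m IH]; [rewrite /= gmul1g | rewrite addSn !e IH gmulA].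
Qed.

(* the group K used for the Tits-type cocycle *)
Definition Kmul (a b : G * (G -> bool)) : G * (G -> bool) :=
  (a.1 ** b.1, fun r => a.2 r (+) b.2 (gconj (ginv a.1) r)).
Definition Kone : G * (G -> bool) := (1, fun _ => false).
Definition Kinv (a : G * (G -> bool)) : G * (G -> bool) :=
  (ginv a.1, fun r => a.2 (gconj a.1 r)).

Lemma KmulA x y z : Kmul x (Kmul y z) = Kmul (Kmul x y) z.
Proof.
case: x y z => [g p] [h q] [k c]; rewrite /Kmul /=; congr pair; first exact: gmulA.
by apply: funext => r; rewrite ginvM gconjM addbA.
Qed.
Lemma Kmul1 x : Kmul Kone x = x.
Proof.
case: x => g p; rewrite /Kmul /=; congr pair; first exact: gmul1g.
by apply: funext => r; rewrite ginv1 gconj1.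
Qed.
Lemma Kmulg1 x : Kmul x Kone = x.
Proof.
case: x => g p; rewrite /Kmul /=; congr pair; first exact: gmulg1.
by apply: funext => r; rewrite addbF.
Qed.
Lemma KmulV x : Kmul (Kinv x) x = Kone.
Proof.
case: x => g p; rewrite /Kmul /=; congr pair; first exact: gmulVg.
by apply: funext => r; rewrite ginvK addbb.
Qed.
Lemma KmulgV x : Kmul x (Kinv x) = Kone.
Proof.
case: x => g p; rewrite /Kmul /=; congr pair; first exact: gmulgV.
by apply: funext => r; rewrite gconjVK addbb.
Qed.

Definition KG : group := {| gT := G * (G -> bool); gmul := Kmul; gone := Kone; ginv := Kinv;
  gmulA := KmulA; gmul1g := Kmul1; gmulg1 := Kmulg1; gmulVg := KmulV; gmulgV := KmulgV |}.


Fixpoint refl (l : seq G) : seq G :=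
  if l is s :: l' then s :: map (gconj s) (refl l') else [::].

Lemma size_refl l : size (refl l) = size l.
Proof. by elim: l => //= s l IH; rewrite size_map IH. Qed.

Lemma nth_refl l i : i < size l ->
  nth 1 (refl l) i = gconj (gprod (take i l)) (nth 1 l i).
Proof.
elim: l i => [|s l IH] [|i] //= hi.
  by rewrite gconj1.
rewrite (nth_map 1) ?size_refl // IH // gconjM //.
Qed.

Definition eqp (r : G) : pred G := fun t => `[< t = r >].
Definition par (l : seq G) (r : G) : bool := odd (count (eqp r) (refl l)).

Lemma count_conj (g r : G) (X : seq G) : count (eqp r) (map (gconj g) X) = count (eqp (gconj (ginv g) r)) X.
Proof. by rewrite count_map; apply: eq_count => t; rewrite /preim /eqp /=; apply: asbool_equiv_eq; apply: gconj_eq. Qed.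

Lemma par_cons (s : G) (l : seq G) (r : G) : par (s :: l) r = `[< s = r >] (+) par l (gconj (ginv s) r).
Proof. by rewrite /par /= count_conj oddD oddb. Qed.

Lemma refl_map (u : G) (l : seq G) : refl (map (gconj u) l) = map (gconj u) (refl l).
Proof.
elim: l => //= s l IH; rewrite IH -!map_comp; congr cons; apply: eq_map => t /=.
have -> : gconj u s = u ** s ** ginv u by [].
by rewrite !gconjM gconjK.
Qed.

Lemma par_map_conj (u : G) (l : seq G) (r : G) : par (map (gconj u) l) r = par l (gconj (ginv u) r).
Proof. by rewrite /par refl_map count_conj. Qed.

Lemma gprod_map_conj (u : G) (l : seq G) : gprod (map (gconj u) l) = gconj u (gprod l).
Proof. by elim: l => [|s l IH] /=; rewrite ?gconj_one // IH gconjMr. Qed.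

Definition fK (s : G) : KG := (s, fun r => `[< s = r >]).

Lemma gprodK (l : seq G) : gprod (map fK l) = (gprod l, par l).
Proof.
elim: l => [|s l IH] /=.
  by congr pair; apply: funext => r.
rewrite IH /= /Kmul /=; congr pair; apply: funext => r /=.
by rewrite par_cons.
Qed.

Fixpoint alt (H : group) (s t : H) (m : nat) : seq H :=
  if m is m'.+1 then s :: t :: alt s t m' else [::].

Lemma gprod_alt (H : group) (s t : H) m : gprod (alt s t m) = gexp (gmul s t) m.
Proof. by elim: m => //= m IH; rewrite IH gmulA. Qed.

Lemma map_alt (s t : G) m : map fK (alt s t m) = alt (fK s) (fK t) m.
Proof. by elim: m => //= m ->. Qed.

Lemma refl_alt (s t : G) m : ginv s = s -> ginv t = t ->
  refl (alt s t m) = map (fun j => gexp (s ** t) j ** s) (iota 0 m.*2).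
Proof.
move=> invs invt; elim: m => //= m IH.
rewrite IH /=; congr cons.
  by rewrite /gexp /= gmul1g.
congr cons.
  by rewrite /gconj invs /gexp /= gmulg1.
have e2 : iota 2 m.*2 = map (addn 2) (iota 0 m.*2) by rewrite -iotaDl.
rewrite e2 -!map_comp; apply: eq_map => j /=.
rewrite add0n -[s ** t ** gexp (s ** t) j]/(gexp (s ** t) j.+1) gexpS'.
by rewrite /gconj invs invt !gmulA.
Qed.

Lemma par_alt (s t : G) m (r : G) : ginv s = s -> ginv t = t -> gexp (s ** t) m = 1 ->
  par (alt s t m) r = false.
Proof.
move=> invs invt hm; rewrite /par refl_alt // -addnn iotaD map_cat count_cat add0n.
have e : iota m m = map (addn m) (iota 0 m) by rewrite -iotaDl addn0.
rewrite e -map_comp.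
have -> : map ((fun j => gexp (s ** t) j ** s) \o addn m) (iota 0 m)
   = map (fun j => gexp (s ** t) j ** s) (iota 0 m).
  by apply: eq_map => j /=; rewrite gexpD hm gmul1g.
by rewrite oddD addbb.
Qed.

End GroupFacts.

Section Words.
Variable G : group.
Local Notation "x ** y" := (@gmul G x y) (at level 40, left associativity).
Local Notation "1" := (@gone G).
Variable S : G -> Prop.

Lemma word_in_nil : word_in S [::].
Proof. by []. Qed.

Lemma word_in_cons (s : G) l : word_in S (s :: l) <-> S s /\ word_in S l.
Proof.
split=> [h|[hs hl] [|i] hi //=]; last by apply: hl.
by split; [apply: (h 0) | move=> i hi; apply: (h i.+1)].
Qed.

Lemma word_in_cat (a b : seq G) : word_in S (a ++ b) <-> word_in S a /\ word_in S b.
Proof.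
elim: a => [|s a IH] /=; first by split=> [h|[]//]; split.
rewrite !word_in_cons IH; tauto.
Qed.

Lemma word_in_take i (l : seq G) : word_in S l -> word_in S (take i l).
Proof.
elim: l i => [|s l IH] [|i] //= /word_in_cons [hs hl].
by apply/word_in_cons; split => //; apply: IH.
Qed.

Lemma word_in_drop i (l : seq G) : word_in S l -> word_in S (drop i l).
Proof.
elim: l i => [|s l IH] [|i] //= h.
by apply: IH; case/word_in_cons: h.
Qed.

Lemma word_in_map (f : G -> G) (l : seq G) :
  (forall s, S s -> S (f s)) -> word_in S l -> word_in S (map f l).
Proof.
move=> hf; elim: l => [|s l IH] //= /word_in_cons [hs hl].
by apply/word_in_cons; split; [apply: hf | apply: IH].
Qed.

Lemma words_Waff (Waff : G -> Prop) (l : seq G) : is_subgroup Waff ->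
  (forall s, S s -> Waff s) -> word_in S l -> Waff (gprod l).
Proof.
case=> h1 hM _ hSW; elim: l => [|s l IH] //= /word_in_cons [hs hl].
by apply: hM; [apply: hSW | apply: IH].
Qed.

Lemma par_cat (l1 l2 : seq G) r :
  par (l1 ++ l2) r = par l1 r (+) par l2 (gconj (ginv (gprod l1)) r).
Proof.
have E := gprodK (l1 ++ l2).
rewrite map_cat (@gprod_cat (KG G)) !gprodK in E.
exact: (esym (congr1 (fun p => p.2 r) E)).
Qed.

End Words.

From mathcomp Require Import zify.

Section Cox.
Variable G : group.
Local Notation "x ** y" := (@gmul G x y) (at level 40, left associativity).
Local Notation "1" := (@gone G).
Variables (Waff S : G -> Prop).
Hypothesis hC : coxeter_system Waff S.

Lemma S_invol (s : G) : S s -> s ** s = 1.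
Proof. by case: hC => _ _ hinv _ _ hs; case: (hinv s hs). Qed.

Lemma S_Waff (s : G) : S s -> Waff s.
Proof. by case: hC => _ hSW _ _ _; apply: hSW. Qed.

Lemma Waff_sub : is_subgroup Waff.
Proof. by case: hC. Qed.

Lemma Waff_word (y : G) : Waff y -> exists l, word_in S l /\ y = gprod l.
Proof. by case: hC => _ _ _ hg _; apply: hg. Qed.

Lemma word_Waff (l : seq G) : word_in S l -> Waff (gprod l).
Proof. apply: words_Waff; [exact: Waff_sub | exact: S_Waff]. Qed.

Lemma par_welldef (l1 l2 : seq G) r : word_in S l1 -> word_in S l2 ->
  gprod l1 = gprod l2 -> par l1 r = par l2 r.
Proof.
case: hC => hsub hSW hinv hgen hU.
have h1 : forall s, S s -> @gmul (KG G) (fK s) (fK s) = @gone (KG G).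
  move=> s hs; rewrite /= /Kmul /Kone /=; congr pair; first exact: S_invol.
  apply: funext => r' /=.
  have e : gconj s s = s by rewrite /gconj mulgK.
  have -> : `[< s = gconj (ginv s) r' >] = `[< s = r' >].
    apply: asbool_equiv_eq; split => h.
      by have := (proj2 (gconj_eq s s r')) h; rewrite e.
    by subst r'; apply: (proj1 (gconj_eq s s s)); rewrite e.
  by rewrite addbb.
have h2 : forall s t m, S s -> S t -> gexp (s ** t) m = 1 ->
    @gexp (KG G) (@gmul (KG G) (fK s) (fK t)) m = @gone (KG G).
  move=> s t m hs ht hm.
  rewrite -(gprod_alt (fK s) (fK t)) -map_alt gprodK gprod_alt hm /=.
  rewrite /Kone; congr pair; apply: funext => r'.
  by apply: par_alt => //; apply: invol; apply: S_invol.
have [phi [phis phiM]] := hU (KG G) (@fK G) h1 h2.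
case: hsub => hW1 hWM _.
have phi1 : phi 1 = @gone (KG G).
  have := phiM 1 1 hW1 hW1; rewrite gmul1g => e.
  apply: (@mulg_cancelr (KG G) (phi 1)); by rewrite gmul1g -e.
have phiw : forall l, word_in S l -> phi (gprod l) = @gprod (KG G) (map (@fK G) l).
  elim=> [|s l IH] /=; first by rewrite phi1.
  move=> /word_in_cons [hs hl].
  rewrite phiM; [|exact: hSW|exact: word_Waff].
  by rewrite phis // IH.
move=> w1 w2 e.
have := congr1 (fun p => p.2 r) (phiw _ w1); have := congr1 (fun p => p.2 r) (phiw _ w2).
by rewrite e !gprodK /= => <-.
Qed.


Lemma reduced_cons (s : G) (l : seq G) y :
  reduced_expr S (s :: l) y -> reduced_expr S l (gprod l).
Proof.
case=> hw hp hmin; case/word_in_cons: hw => hs hl; split => // l' hl' e.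
have := hmin (s :: l'); rewrite /= ltnS; apply.
  by apply/word_in_cons.
by rewrite -hp /= e.
Qed.

Lemma reduced_notin (s : G) (l : seq G) y i :
  reduced_expr S (s :: l) y -> i < size l -> nth 1 (refl l) i <> s.
Proof.
case=> hw hp hmin hi e; case/word_in_cons: hw => hs hl.
rewrite nth_refl // in e.
set p := gprod (take i l) in e; set x := nth 1 l i in e; set q := gprod (drop i.+1 l).
have el : gprod l = p ** (x ** q).
  by rewrite -{1}(cat_take_drop i l) gprod_cat (drop_nth 1 hi).
have hx : x ** x = 1 by apply: S_invol; apply: hl.
have := hmin (take i l ++ drop i.+1 l).
have hw' : word_in S (take i l ++ drop i.+1 l).
  by apply/word_in_cat; split; [apply: word_in_take | apply: word_in_drop].
have hg : gprod (take i l ++ drop i.+1 l) = y.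
  rewrite -hp /= -e el /gconj gprod_cat -/p -/q !gmulA mulgVK.
  by rewrite -[p ** x ** x](gmulA p x x) hx gmulg1.
move=> /(_ hw' hg); rewrite /= size_cat size_take size_drop hi; lia.
Qed.

Lemma reduced_count (l : seq G) y r :
  reduced_expr S l y -> count (eqp r) (refl l) <= 1.
Proof.
elim: l y r => [|s l IH] y r hr //=.
rewrite count_conj; have hl := reduced_cons hr.
have := IH _ (gconj (ginv s) r) hl.
case: (pselect (s = r)) => [e|ne].
  subst r; rewrite /eqp asboolT //.
  have -> : gconj (ginv s) s = s by rewrite /gconj gmulVg gmul1g ginvK.
  case E: (count _ _) => [//|n] _; exfalso.
  have : has (eqp s) (refl l) by rewrite has_count E.
  case/(has_nthP 1) => i; rewrite size_refl => hi /asboolP.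
  exact: (reduced_notin hr hi).
by rewrite /eqp asboolF.
Qed.

Lemma reduced_exists (l : seq G) : word_in S l -> exists l0, reduced_expr S l0 (gprod l).
Proof.
have key : forall l, word_in S l ->
    ~ (exists l', [/\ word_in S l', gprod l' = gprod l & size l' < size l]) ->
    reduced_expr S l (gprod l).
  move=> l1 hl1 no; split => // l' hl' e; rewrite leqNgt; apply/negP => lt.
  by apply: no; exists l'.
move: (leqnn (size l)); move: {2}(size l) => n.
elim: n l => [|n IH] l hn hl.
  exists l; apply: key => // -[l' [_ _ lt]]; lia.
case: (pselect (exists l', [/\ word_in S l', gprod l' = gprod l & size l' < size l])).
  move=> [l' [hl' e lt]]; rewrite -e; apply: IH => //; lia.
by move=> no; exists l; apply: key.
Qed.

Definition eta (y H : G) : bool :=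
  `[< exists l, [/\ word_in S l, gprod l = y & par l H] >].

Lemma eta_word (l : seq G) H : word_in S l -> eta (gprod l) H = par l H.
Proof.
move=> hl; case E: (par l H).
  by apply/asboolP; exists l; split.
apply/asboolF => -[l' [hl' e p]].
by rewrite (par_welldef H hl' hl e) E in p.
Qed.

Lemma sep1_eta (y H : G) : Waff y -> (sep1 S y H <-> eta y H).
Proof.
move=> hy; split.
  case=> l [hr [i hi e]]; have [hw hp _] := hr.
  rewrite -hp eta_word // /par.
  have c1 := reduced_count H hr.
  have : has (eqp H) (refl l).
    apply/(has_nthP 1); exists i; first by rewrite size_refl.
    by rewrite /eqp nth_refl //; apply/asboolP.
  rewrite has_count => c0.
  by have -> : count (eqp H) (refl l) = 1%N by lia.
move=> he; have [l [hl e]] := Waff_word hy.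
have [l0 hr] := reduced_exists hl; have [hw0 hp0 _] := hr.
rewrite e -hp0 eta_word // in he.
have : has (eqp H) (refl l0).
  rewrite has_count lt0n; apply/negP => /eqP c; by rewrite /par c in he.
case/(has_nthP 1) => i; rewrite size_refl => hi /asboolP hn.
exists l0; split; first by rewrite e.
by exists i => //; rewrite -nth_refl.
Qed.

Lemma eta_mul (v x H : G) : Waff v -> Waff x ->
  eta (v ** x) H = eta v H (+) eta x (gconj (ginv v) H).
Proof.
move=> /Waff_word [l1 [h1 ->]] /Waff_word [l2 [h2 ->]].
rewrite -gprod_cat !eta_word ?par_cat //.
by apply/word_in_cat.
Qed.

Lemma eta_conj (u y J : G) : (forall s, S s -> S (gconj u s)) -> Waff y ->
  eta (gconj u y) J = eta y (gconj (ginv u) J).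
Proof.
move=> hu /Waff_word [l [hl ->]].
rewrite -gprod_map_conj !eta_word ?par_map_conj //.
exact: word_in_map.
Qed.

End Cox.

Lemma asbool_iff (P : Prop) (b : bool) : (P <-> b) -> `[< P >] = b.
Proof. by case: b => h; [apply: asboolT; apply/h | apply: asboolF => /h]. Qed.

Lemma decomp_uniq (G : group) (Waff Omega : G -> Prop) (v1 u1 v2 u2 : G) :
  is_subgroup Waff -> is_subgroup Omega -> (forall x, Waff x -> Omega x -> x = gone) ->
  Waff v1 -> Omega u1 -> Waff v2 -> Omega u2 -> gmul v1 u1 = gmul v2 u2 ->
  v1 = v2 /\ u1 = u2.
Proof.
case=> _ hWM hWV [_ hOM hOV] htriv h1 h2 h3 h4 e.
have e1 : gmul (ginv v2) v1 = gmul u2 (ginv u1).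
  by rewrite -(mulgK u1 v1) e -gmulA mulKg.
have ex : gmul u2 (ginv u1) = gone.
  apply: htriv; last by apply: hOM => //; apply: hOV.
  by rewrite -e1; apply: hWM => //; apply: hWV.
have eu : u2 = u1 by apply: (@mulg_cancelr _ (ginv u1)); rewrite ex gmulgV.
split=> //; subst u2.
have ev : gmul (ginv v2) v1 = gone by rewrite e1 gmulgV.
by apply: (@mulg_cancel _ (ginv v2)); rewrite ev gmulVg.
Qed.

Lemma sepW_iff (G : group) (Waff S Omega : G -> Prop) (va ua vb ub H : G) :
  extended_coxeter Waff S Omega ->
  Waff va -> Omega ua -> Waff vb -> Omega ub ->
  (sepW Waff S Omega (gmul va ua) (gmul vb ub) H <->
   sep1 S (gmul (ginv va) vb) (gconj (ginv va) H)).
Proof.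
case=> hC [hO _ _ _ htriv] ha1 ha2 hb1 hb2; have hWs := Waff_sub hC.
split.
  move=> [v1 [u1 [v2 [u2 [[h1 h2 e1] [[h3 h4 e2] hs]]]]]].
  have [ev1 _] := decomp_uniq hWs hO htriv h1 h2 ha1 ha2 (esym e1).
  have [ev2 _] := decomp_uniq hWs hO htriv h3 h4 hb1 hb2 (esym e2).
  subst v1 v2; exact: hs.
by move=> hs; exists va, ua, vb, ub.
Qed.

Theorem lemma2p7p10 (G : group) (Waff S Omega : G -> Prop)
  (hW : extended_coxeter Waff S Omega) (w w' : G) :
  fcm_mul (Lmon Waff S Omega w) (fcm_act w (Lmon Waff S Omega w'))
  = fcm_mul (fcm_mul (Xmon Waff S Omega w w') (Xmon Waff S Omega w w'))
            (Lmon Waff S Omega (gmul w w')).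
Proof.
have hW0 := hW.
case: hW => hC [hO hconjW hconjS hdec htriv].
have hWs := Waff_sub hC.
have [hW1 hWM _] := hWs; have [hO1 hOM _] := hO.
have hL1 : forall a b K, Waff a -> Omega b ->
    (sepW Waff S Omega gone (gmul a b) K <-> eta S a K).
  move=> a b K ha hb.
  have := sepW_iff K hW0 hW1 hO1 ha hb.
  rewrite gmulg1 ginv1 gmul1g gconj1 => ->.
  exact (sep1_eta hC K ha).
have [v [u [hv hu ->]]] := hdec w.
have [v' [u' [hv' hu' ->]]] := hdec w'.
set x := gconj u v'.
have hx : Waff x := hconjW u v' hu hv'.
have ew : gmul (gmul v u) (gmul v' u') = gmul (gmul v x) (gmul u u').
  by rewrite /x /gconj !gmulA mulgVK.
have hvx : Waff (gmul v x) by apply: hWM.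
have huu : Omega (gmul u u') by apply: hOM.
apply: funext => H.
rewrite /fcm_mul /fcm_act /Lmon /Xmon ew.
set J := gconj (ginv v) H.
have eA : `[< sepW Waff S Omega gone (gmul v u) H >] = eta S v H.
  by apply: asbool_iff; apply: hL1.
have hB : sepW Waff S Omega (gmul v u) (gmul (gmul v x) (gmul u u')) H <-> eta S x J.
  rewrite sepW_iff // mulKg. exact (sep1_eta hC J hx).
have eB : `[< sepW Waff S Omega gone (gmul v' u') (gconj (ginv (gmul v u)) H) >] = eta S x J.
  apply: asbool_iff; rewrite hL1 // ginvM gconjM -/J.
  by rewrite /x (eta_conj hC J (fun s => hconjS u s hu) hv').
have eC : `[< sepW Waff S Omega gone (gmul (gmul v x) (gmul u u')) H >]
    = eta S v H (+) eta S x J.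
  by apply: asbool_iff; rewrite hL1 // (eta_mul hC H hv hx).
have eX : `[< sepW Waff S Omega gone (gmul v u) H /\
             sepW Waff S Omega (gmul v u) (gmul (gmul v x) (gmul u u')) H >]
    = eta S v H && eta S x J.
  apply: asbool_iff; rewrite hL1 // hB; split; [by case=> -> -> | by case/andP].
rewrite eA eB eC eX.
by case: (eta S v H); case: (eta S x J).
Qed.
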